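(* For every initial condition $z(0,0)\in\Lambda$ there exists a complete solution $z=(x,\sigma)$ of the hybrid system $\mathcal H=(C,f,D,g)$.
   Context: Network model. $(N,E)$ is a connected directed graph with $N=\{1,\dots,|N|\}$, $E\subseteq N\times N$, with arbitrary orientation: if $(i,j)\in E$ then $(j,i)\notin E$. For $j\in N$, ''$i:i\to j$'' ranges over $i$ with $(i,j)\in E$ and ''$k:j\to k$'' over $k$ with $(j,k)\in E$. Constants: $M_j>0$, $p^L_j\in\mathbb{R}$ ($j\in N$), $B_{ij}>0$ ($(i,j)\in E$). Continuous state $x=(\eta,\omega,x^s)\in\mathbb{R}^n$ with $\eta_{ij}\in\mathbb{R}$ ($(i,j)\in E$), $\omega_j\in\mathbb{R}$, $x^s_j\in\mathbb{R}^{n_j}$ ($j\in N$), $n=|E|+|N|+\sum_jn_j$; $p_{ij}=B_{ij}\sin\eta_{ij}$, $s_j=g_j(x^s_j,-\omega_j)$, where $f_j:\mathbb{R}^{n_j}\times\mathbb{R}\to\mathbb{R}^{n_j}$, $g_j:\mathbb{R}^{n_j}\times\mathbb{R}\to\mathbb{R}$ are globally Lipschitz. Hysteretic loads as a hybrid system. For each $j$ constants $\overline d_j\ge0$ and thresholds $\omega^1_j>\omega^0_j>0$ are given. ${\rm sgn}(a)=1$ if $a\ge0$ and $-1$ otherwise. The discrete state is $\sigma\in P^{|N|}$, $P=\{-1,0,1\}$, and $z=(x,\sigma)$. Let $\mathcal I_j(\omega_j)=\{{\rm sgn}(\omega_j)\}$ if $|\omega_j|>\omega^1_j$, $\{0\}$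 if $|\omega_j|<\omega^0_j$, $\{0,{\rm sgn}(\omega_j)\}$ if $\omega^0_j\le|\omega_j|\le\omega^1_j$; $\Lambda=C=\{z\in\mathbb{R}^n\times P^{|N|}:\sigma_j\in\mathcal I_j(\omega_j)\ \forall j\}$. Flow map $f$ on $C$: $\dot\eta_{ij}=\omega_i-\omega_j$; $M_j\dot\omega_j=-p^L_j+s_j-\overline d_j\sigma_j-\sum_{k:j\to k}p_{jk}+\sum_{i:i\to j}p_{ij}$; $\dot x^s_j=f_j(x^s_j,-\omega_j)$; $\dot\sigma_j=0$. Jump set $D$: the set of $z\in\Lambda$ such that for some $j$, either ($|\omega_j|=\omega^1_j$ and $\sigma_j=0$) or ($|\omega_j|=\omega^0_j$ and $\sigma_j={\rm sgn}(\omega_j)$). Jump map $g$ on $D$: $x^+=x$; $\sigma_j^+={\rm sgn}(\omega_j)$ if $|\omega_j|=\omega^1_j$ and $\sigma_j=0$, $\sigma_j^+=0$ if $|\omega_j|=\omega^0_j$ and $\sigma_j={\rm sgn}(\omega_j)$, $\sigma_j^+=\sigma_j$ otherwise (so $g(D)\subseteq C$). Hybrid solutions. A hybrid time domain is a subset $K\subseteq\mathbb{R}_{\ge0}\times\mathbb{N}_0$ that is a union of a finite or infinite sequence of sets $[t_\ell,t_{\ell+1}]\times\{\ell\}$ ($0=t_0\le t_1\le\dots$), the last one (if any) possibly of the form $[t_\ell,t_{\ell+1})\times\{\ell\}$ or $[t_\ell,\infty)\times\{\ell\}$. A solution of $\mathcal H$ is a map $z:K\to\mathbb{R}^n\times P^{|N|}$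 on a hybrid time domain with $z(0,0)\in C\cup D$, such that for each $\ell$, $t\mapsto z(t,\ell)$ is locally absolutely continuous on $T_\ell=\{t:(t,\ell)\in K\}$, and if $T_\ell$ has nonempty interior then $z(t,\ell)\in C$ for all $t$ in the interior and $\dot z(t,\ell)=f(z(t,\ell))$ for almost all $t\in T_\ell$; and whenever $(t,\ell),(t,\ell+1)\in K$, $z(t,\ell)\in D$ and $z(t,\ell+1)=g(z(t,\ell))$. A solution is complete if $K$ is unbounded. *)

(* Defs.v *)
From Stdlib Require Import Reals Lra Lia ZArith Relations.
Open Scope R_scope.

Fixpoint rsum (m : nat) (F : nat -> R) : R :=
  match m with O => 0 | S m' => rsum m' F + F m' end.

(* ---------- network data (nodes are 0..nN-1, i.e. node j+1 of the paper is j) ---------- *)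
Record Net := mkNet {
  nN   : nat;
  Enet : nat -> nat -> bool;
  Mc   : nat -> R;
  pL   : nat -> R;
  Bc   : nat -> nat -> R;
  dbar : nat -> R;
  w0   : nat -> R;
  w1   : nat -> R;
  ns   : nat -> nat;
  fj   : nat -> (nat -> R) -> R -> (nat -> R);  (* f_j : R^{n_j} x R -> R^{n_j} (first n_j coords) *)
  gj   : nat -> (nat -> R) -> R -> R
}.

(* Global Lipschitz continuity of F : R^m x R -> R^p, coordinates of vectors
   being the first m (resp. p) entries, with the l^1 norm. *)
Definition LipschitzVec (m p : nat) (F : (nat -> R) -> R -> (nat -> R)) : Prop :=
  exists L : R, forall (a b : nat -> R) (u v : R) (k : nat), (k < p)%nat ->
    Rabs (F a u k - F b v k) <= L * (rsum m (fun i => Rabs (a i - b i)) + Rabs (u - v)).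

Definition LipschitzScal (m : nat) (G : (nat -> R) -> R -> R) : Prop :=
  exists L : R, forall (a b : nat -> R) (u v : R),
    Rabs (G a u - G b v) <= L * (rsum m (fun i => Rabs (a i - b i)) + Rabs (u - v)).

Definition NetAssumptions (P : Net) : Prop :=
  (forall i j, Enet P i j = true -> (i < nN P)%nat /\ (j < nN P)%nat) /\
  (* arbitrary orientation *)
  (forall i j, Enet P i j = true -> Enet P j i = false) /\
  (forall i j, (i < nN P)%nat -> (j < nN P)%nat ->
     clos_refl_trans nat (fun a b => Enet P a b = true \/ Enet P b a = true) i j) /\
  (forall j, (j < nN P)%nat -> 0 < Mc P j) /\
  (forall i j, Enet P i j = true -> 0 < Bc P i j) /\
  (forall j, (j < nN P)%nat -> 0 <= dbar P j) /\
  (forall j, (j < nN P)%nat -> 0 < w0 P j /\ w0 P j < w1 P j) /\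
  (forall j, (j < nN P)%nat -> LipschitzVec (ns P j) (ns P j) (fj P j)) /\
  (forall j, (j < nN P)%nat -> LipschitzScal (ns P j) (gj P j)).

Record HState := mkHState {
  eta : nat -> nat -> R;   (* eta_ij, meaningful for (i,j) in E *)
  om  : nat -> R;
  xs  : nat -> nat -> R;   (* xs j k = k-th coordinate of x^s_j, k < n_j *)
  sg  : nat -> Z           (* sigma_j in P = {-1,0,1} *)
}.

Definition sgn (a : R) : Z := if Rle_dec 0 a then 1%Z else (-1)%Z.

Definition InI (lo hi w : R) (s : Z) : Prop :=
  (hi < Rabs w -> s = sgn w) /\
  (Rabs w < lo -> s = 0%Z) /\
  (lo <= Rabs w <= hi -> s = 0%Z \/ s = sgn w).

Definition InLambda (P : Net) (z : HState) : Prop :=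
  forall j, (j < nN P)%nat -> InI (w0 P j) (w1 P j) (om z j) (sg z j).

Definition InC (P : Net) (z : HState) : Prop := InLambda P z.

Definition InD (P : Net) (z : HState) : Prop :=
  InLambda P z /\
  exists j, (j < nN P)%nat /\
    ((Rabs (om z j) = w1 P j /\ sg z j = 0%Z) \/
     (Rabs (om z j) = w0 P j /\ sg z j = sgn (om z j))).

Definition gsig (lo hi w : R) (s : Z) : Z :=
  match Req_EM_T (Rabs w) hi, Z.eq_dec s 0 with
  | left _, left _ => sgn w
  | _, _ =>
    match Req_EM_T (Rabs w) lo, Z.eq_dec s (sgn w) with
    | left _, left _ => 0%Z
    | _, _ => s
    end
  end.

Definition gmap (P : Net) (z : HState) : HState :=
  mkHState (eta z) (om z) (xs z)
    (fun j => if Nat.ltb j (nN P) then gsig (w0 P j) (w1 P j) (om z j) (sg z j) else sg z j).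

Definition pflow (P : Net) (z : HState) (i j : nat) : R := Bc P i j * sin (eta z i j).
Definition sflow (P : Net) (z : HState) (j : nat) : R := gj P j (xs z j) (- om z j).

Definition omega_rhs (P : Net) (z : HState) (j : nat) : R :=
  - pL P j + sflow P z j - dbar P j * IZR (sg z j)
  - rsum (nN P) (fun k => if Enet P j k then pflow P z j k else 0)
  + rsum (nN P) (fun i => if Enet P i j then pflow P z i j else 0).

Definition HasFlowDeriv (P : Net) (zt : R -> HState) (t : R) : Prop :=
  (forall i j, Enet P i j = true ->
     derivable_pt_lim (fun s => eta (zt s) i j) t (om (zt t) i - om (zt t) j)) /\
  (forall j, (j < nN P)%nat ->
     exists l, derivable_pt_lim (fun s => om (zt s) j) t l /\
               Mc P j * l = omega_rhs P (zt t) j) /\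
  (forall j k, (j < nN P)%nat -> (k < ns P j)%nat ->
     derivable_pt_lim (fun s => xs (zt s) j k) t (fj P j (xs (zt t) j) (- om (zt t) j) k)) /\
  (forall j, (j < nN P)%nat ->
     derivable_pt_lim (fun s => IZR (sg (zt s) j)) t 0).

Definition NullSet (A : R -> Prop) : Prop :=
  forall eps, 0 < eps -> exists lo hi : nat -> R,
    (forall n, lo n <= hi n) /\
    (forall t, A t -> exists n, lo n < t < hi n) /\
    (forall m, rsum m (fun n => hi n - lo n) <= eps).

Definition AbsContOn (a b : R) (u : R -> R) : Prop :=
  forall eps, 0 < eps -> exists delta, 0 < delta /\
    forall (m : nat) (lo hi : nat -> R),
      (forall k, (k < m)%nat -> a <= lo k /\ lo k <= hi k /\ hi k <= b) ->
      (forall k, (S k < m)%nat -> hi k <= lo (S k)) ->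
      rsum m (fun k => hi k - lo k) < delta ->
      rsum m (fun k => Rabs (u (hi k) - u (lo k))) < eps.

Definition LocAbsCont (T : R -> Prop) (u : R -> R) : Prop :=
  forall a b, a <= b -> (forall s, a <= s <= b -> T s) -> AbsContOn a b u.

Definition LocAbsContState (P : Net) (T : R -> Prop) (zt : R -> HState) : Prop :=
  (forall i j, Enet P i j = true -> LocAbsCont T (fun s => eta (zt s) i j)) /\
  (forall j, (j < nN P)%nat -> LocAbsCont T (fun s => om (zt s) j)) /\
  (forall j k, (j < nN P)%nat -> (k < ns P j)%nat -> LocAbsCont T (fun s => xs (zt s) j k)) /\
  (forall j, (j < nN P)%nat -> LocAbsCont T (fun s => IZR (sg (zt s) j))).

Definition Interior (T : R -> Prop) (t : R) : Prop :=
  exists e, 0 < e /\ forall s, Rabs (s - t) < e -> T s.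

(* K s l  means (s,l) in K *)
Definition HybridTimeDomain (K : R -> nat -> Prop) : Prop :=
  exists tt : nat -> R,
    tt O = 0 /\ (forall l, tt l <= tt (S l)) /\
    ( (forall s l, K s l <-> tt l <= s <= tt (S l))
    \/ exists J : nat,
         (forall s l, (l < J)%nat -> (K s l <-> tt l <= s <= tt (S l))) /\
         (forall s l, (J < l)%nat -> ~ K s l) /\
         ( (forall s, K s J <-> tt J <= s <= tt (S J))
         \/ (forall s, K s J <-> tt J <= s < tt (S J))
         \/ (forall s, K s J <-> tt J <= s) ) ).

Definition IsSolution (P : Net) (K : R -> nat -> Prop) (z : R -> nat -> HState) : Prop :=
  HybridTimeDomain K /\
  K 0 O /\ (InC P (z 0 O) \/ InD P (z 0 O)) /\
  (forall l : nat,
     LocAbsContState P (fun t => K t l) (fun t => z t l) /\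
     (forall t, Interior (fun s => K s l) t -> InC P (z t l)) /\
     (exists Nz, NullSet Nz /\
        forall t, K t l -> ~ Nz t ->
          Interior (fun s => K s l) t /\ HasFlowDeriv P (fun s => z s l) t)) /\
  (forall t l, K t l -> K t (S l) -> InD P (z t l) /\ z t (S l) = gmap P (z t l)).

Definition Complete (K : R -> nat -> Prop) : Prop :=
  forall Mb : R, exists s l, K s l /\ Mb <= s + INR l.

(* Main.v *)
Require Import Defs.
From Coquelicot Require Import Coquelicot.
From Stdlib Require Import Reals.
From Stdlib Require Import Lra Lia ZArith List ClassicalEpsilon Classical FunctionalExtensionality.
Open Scope R_scope.

Fixpoint lsum {I : Type} (l : list I) (v : I -> R) : R :=
  match l with nil => 0 | cons i l' => Rabs (v i) + lsum l' v end.

Lemma lsum_ge0 {I} (l : list I) v : 0 <= lsum l v.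
Proof. induction l; simpl; [lra|]. pose proof (Rabs_pos (v a)); lra. Qed.

Lemma lsum_in {I} (l : list I) v i : In i l -> Rabs (v i) <= lsum l v.
Proof. induction l; simpl; [tauto|]. intros [->|H].
 - pose proof (lsum_ge0 l v); lra.
 - pose proof (Rabs_pos (v a)); specialize (IHl H); lra. Qed.

Lemma lsum_triang {I} (l : list I) a b c :
  lsum l (fun i => a i - c i) <= lsum l (fun i => a i - b i) + lsum l (fun i => b i - c i).
Proof. induction l; simpl; [lra|].
 pose proof (Rabs_triang (a a0 - b a0) (b a0 - c a0)).
 replace (a a0 - b a0 + (b a0 - c a0)) with (a a0 - c a0) in H by ring. lra. Qed.

Lemma lsum_le_len {I} (l : list I) v B : (forall i, Rabs (v i) <= B) -> lsum l v <= INR (length l) * B.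
Proof. intros H; induction l; simpl length; simpl lsum; [rewrite Rmult_0_l; lra|].
 rewrite S_INR. specialize (H a). lra. Qed.

Lemma lsum_scal {I} (l : list I) v t : lsum l (fun i => t * v i) = Rabs t * lsum l v.
Proof. induction l; simpl; [ring|]. rewrite IHl, Rabs_mult. ring. Qed.

Lemma lsum_cont {I} (l : list I) (x : R -> I -> R) t :
  (forall i, continuity_pt (fun s => x s i) t) ->
  forall eps, 0 < eps -> exists d, 0 < d /\ forall s, Rabs (s - t) < d -> lsum l (fun i => x s i - x t i) < eps.
Proof.
 intros Hc. induction l; intros eps He.
 - exists 1; split; [lra|]; intros; simpl; lra.
 - destruct (IHl (eps/2)) as [d1 [Hd1 H1]]; [lra|].
   destruct (Hc a (eps/2)) as [d2 [Hd2 H2]]; [lra|].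
   exists (Rmin d1 d2); split; [apply Rmin_pos; lra|].
   intros s Hs. simpl.
   assert (A1 := H1 s (Rlt_le_trans _ _ _ Hs (Rmin_l _ _))).
   destruct (Req_dec s t) as [->|Hne].
   + unfold Rminus at 1; rewrite Rplus_opp_r, Rabs_R0. lra.
   + assert (A2 : Rabs (x s a - x t a) < eps/2).
     { apply (H2 s). split. { split; [constructor| congruence]. }
       simpl. unfold R_dist. apply (Rlt_le_trans _ _ _ Hs (Rmin_r _ _)). }
     lra.
Qed.

Lemma le_geom (a b C : R) : (forall n, a <= b + C * (/2)^n) -> a <= b.
Proof.
 intros H. destruct (Rle_dec a b) as [|Hn]; [auto|]. exfalso.
 assert (HC : 0 < C). { specialize (H O). simpl in H. lra. }
 destruct (pow_lt_1_zero (/2) ltac:(rewrite Rabs_pos_eq; lra) ((a - b)/C)) as [N HN].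
 { apply Rdiv_lt_0_compat; lra. }
 specialize (HN N (le_n _)). specialize (H N).
 rewrite Rabs_pos_eq in HN by (apply pow_le; lra).
 apply (Rmult_lt_compat_l C) in HN; [|lra].
 replace (C * ((a-b)/C)) with (a - b) in HN by (field; lra). lra.
Qed.

Lemma geom_tail (u : nat -> R) (A : R) :
  (forall n, Rabs (u (S n) - u n) <= A * (/2)^n) ->
  forall n k, Rabs (u (k + n)%nat - u n) <= 2 * A * (/2)^n * (1 - (/2)^k).
Proof.
 intros H n k. induction k.
 - simpl. unfold Rminus; rewrite Rplus_opp_r, Rabs_R0. lra.
 - replace (S k + n)%nat with (S (k + n)) by lia.
   eapply Rle_trans. { replace (u (S (k+n)) - u n) with ((u (S (k+n)) - u (k+n)%nat) + (u (k+n)%nat - u n)) by ring. apply Rabs_triang. }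
   specialize (H (k+n)%nat). rewrite pow_add in H. simpl pow.
   nra.
Qed.

Lemma exp_le_exp' x y : x <= y -> exp x <= exp y.
Proof. intros [H|H]; [left; apply exp_increasing; auto|right; rewrite H; auto]. Qed.

Lemma tail_le A p q : 0 <= A -> 0 <= p -> 0 <= q -> 2*A*p*(1-q) <= 2*A*p.
Proof. intros. assert (0 <= A*p*q) by (apply Rmult_le_pos; [apply Rmult_le_pos|]; auto). lra. Qed.

Lemma seq_lim (u : nat -> R) A : (forall n, Rabs (u (S n) - u n) <= A * (/2)^n) ->
  exists l, Lim_seq u = Finite l /\ forall n, Rabs (l - u n) <= 2*A*(/2)^n.
Proof.
 intros H. assert (HA : 0 <= A). { specialize (H O). simpl in H. pose proof (Rabs_pos (u 1%nat - u O)). lra. }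
 assert (HC : Cauchy_crit u).
 { intros eps He. destruct (pow_lt_1_zero (/2) ltac:(rewrite Rabs_pos_eq; lra) (eps/(4*A+1))) as [N HN].
   { apply Rdiv_lt_0_compat; lra. }
   exists N. intros n m Hn Hm. unfold R_dist.
   pose proof (geom_tail u A H N (n - N)) as G1. pose proof (geom_tail u A H N (m - N)) as G2.
   replace (n - N + N)%nat with n in G1 by lia. replace (m - N + N)%nat with m in G2 by lia.
   specialize (HN N (le_n _)). rewrite Rabs_pos_eq in HN by (apply pow_le; lra).
   pose proof (pow_le (/2) (n-N) ltac:(lra)). pose proof (pow_le (/2) (m-N) ltac:(lra)).
   pose proof (pow_le (/2) N ltac:(lra)).
   assert (X1 : Rabs (u n - u N) <= 2 * A * (/2)^N) by (eapply Rle_trans; [exact G1|apply tail_le; auto]).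
   assert (X2 : Rabs (u m - u N) <= 2 * A * (/2)^N) by (eapply Rle_trans; [exact G2|apply tail_le; auto]).
   assert (0 <= A * (/2)^N) by (apply Rmult_le_pos; auto).
   replace (u n - u m) with ((u n - u N) - (u m - u N)) by ring.
   eapply Rle_lt_trans. apply Rabs_triang. rewrite Rabs_Ropp.
   apply (Rmult_lt_compat_l (4*A+1)) in HN; [|lra].
   replace ((4*A+1) * (eps/(4*A+1))) with eps in HN by (field; lra). lra. }
 destruct (R_complete u HC) as [l Hl]. exists l. split.
 - apply is_lim_seq_unique. apply is_lim_seq_Reals. auto.
 - intros n. destruct (Rle_dec (Rabs (l - u n)) (2*A*(/2)^n)) as [|Hn]; [auto|]. exfalso.
   destruct (Hl (Rabs (l - u n) - 2*A*(/2)^n)) as [N HN]; [lra|].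
   specialize (HN (N + n)%nat ltac:(lia)). unfold R_dist in HN.
   pose proof (geom_tail u A H n N) as G. pose proof (pow_le (/2) N ltac:(lra)).
   pose proof (pow_le (/2) n ltac:(lra)).
   assert (X : Rabs (u (N + n)%nat - u n) <= 2 * A * (/2)^n) by (eapply Rle_trans; [exact G|apply tail_le; auto]).
   pose proof (Rabs_triang (- (u (N+n)%nat - l)) (u (N+n)%nat - u n)) as T. rewrite Rabs_Ropp in T.
   replace (- (u (N+n)%nat - l) + (u (N+n)%nat - u n)) with (l - u n) in T by ring.
   apply Rnot_le_lt in Hn. lra.
Qed.

Lemma lsum_ext {I} (l : list I) v w : (forall i, v i = w i) -> lsum l v = lsum l w.
Proof. intros H; induction l; simpl; [auto|]. rewrite H, IHl; auto. Qed.

Lemma RInt_minus' f g a b : ex_RInt f a b -> ex_RInt g a b ->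
  RInt (fun x => f x - g x) a b = RInt f a b - RInt g a b.
Proof. intros. exact (RInt_minus f g a b H H0). Qed.

Lemma ex_RInt_minus' f g a b : ex_RInt f a b -> ex_RInt g a b -> ex_RInt (fun x => f x - g x) a b.
Proof. intros. exact (ex_RInt_minus f g a b H H0). Qed.

Lemma exp_ge x : 1 + x <= exp x.
Proof. destruct (Req_dec x 0) as [->|H]; [rewrite exp_0; lra|]. left; apply exp_ineq1; auto. Qed.

Lemma RInt_exp A k t : 0 < k -> RInt (fun s => A * exp (k*s)) 0 t = A / k * (exp (k*t) - 1).
Proof.
 intros Hk. apply is_RInt_unique.
 replace (A / k * (exp (k*t) - 1)) with (minus ((fun s => A / k * exp (k*s)) t) ((fun s => A / k * exp (k*s)) 0)).
 2:{ unfold minus, plus, opp; simpl. rewrite Rmult_0_r, exp_0. ring. }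
 apply (is_RInt_derive (fun s => A / k * exp (k*s)) (fun s => A * exp (k*s)) 0 t).
 - intros s _. auto_derive; [auto|]. field. lra.
 - intros s _. apply (ex_derive_continuous (fun s => A * exp (k*s))). auto_derive. auto.
Qed.

Lemma RInt_abs_le f h t : 0 <= t -> ex_RInt f 0 t -> ex_RInt h 0 t ->
  (forall s, 0 <= s <= t -> Rabs (f s) <= h s) -> Rabs (RInt f 0 t) <= RInt h 0 t.
Proof.
 intros Ht Hf Hh H. apply Rabs_le. split.
 - assert (E : RInt (fun s => - h s) 0 t = - RInt h 0 t) by exact (RInt_opp h 0 t Hh).
   rewrite <- E. apply RInt_le; auto. { exact (ex_RInt_opp h 0 t Hh). }
   intros s Hs. specialize (H s ltac:(lra)). apply Rabs_le_between in H. lra.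
 - apply RInt_le; auto. intros s Hs. specialize (H s ltac:(lra)). apply Rabs_le_between in H. lra.
Qed.

Lemma cont_conv f t : continuity_pt f t -> continuous f t.
Proof. intros H; apply continuity_pt_filterlim; auto. Qed.

Section Picard.
Context {I : Type} (idx : list I) (F : (I -> R) -> (I -> R)) (L : R) (HL0 : 0 <= L)
 (HL : forall a b i, Rabs (F a i - F b i) <= L * lsum idx (fun k => a k - b k)) (v0 : I -> R).

Lemma F_cont (x : R -> I -> R) t : (forall i, continuity_pt (fun s => x s i) t) ->
  forall i, continuity_pt (fun s => F (x s) i) t.
Proof.
 intros Hc i eps He. destruct (lsum_cont idx x t Hc (eps/(L+1))) as [d [Hd H]].
 { apply Rdiv_lt_0_compat; lra. }
 exists d. split; auto. intros s [_ Hs]. simpl in *. unfold R_dist in *.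
 eapply Rle_lt_trans; [apply HL|]. specialize (H s Hs).
 pose proof (lsum_ge0 idx (fun k => x s k - x t k)).
 apply Rle_lt_trans with ((L+1) * lsum idx (fun k => x s k - x t k)); [nra|].
 apply (Rmult_lt_compat_l (L+1)) in H; [|lra].
 replace ((L+1) * (eps/(L+1))) with eps in H by (field; lra). lra.
Qed.

Fixpoint pic (m : nat) : R -> I -> R :=
  match m with
  | O => fun _ => v0
  | S m' => fun t i => v0 i + RInt (fun s => F (pic m' s) i) 0 t
  end.

Definition gg m i := fun s => F (pic m s) i.

Lemma pic_cont m : forall i t, continuity_pt (fun s => pic m s i) t.
Proof.
 induction m; intros i t.
 - simpl. apply continuity_pt_const. intros a b; auto.
 - simpl. apply continuity_pt_plus. { apply continuity_pt_const. intros a b; auto. }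
   apply continuity_pt_filterlim. apply (ex_derive_continuous (fun t => RInt (fun s => F (pic m s) i) 0 t)).
   exists (F (pic m t) i). apply (is_derive_RInt (fun s => F (pic m s) i) _ 0).
   + apply filter_forall. intros b. apply (RInt_correct (fun s => F (pic m s) i) 0 b). apply (@ex_RInt_continuous R_CompleteNormedModule).
     intros z _. apply cont_conv. apply F_cont. auto.
   + apply cont_conv. apply F_cont. auto.
Qed.

Lemma gg_cont m i t : continuous (gg m i) t.
Proof. apply (cont_conv (gg m i)). exact (F_cont (pic m) t (fun i => pic_cont m i t) i). Qed.

Lemma gg_int m i a b : ex_RInt (gg m i) a b.
Proof. apply (@ex_RInt_continuous R_CompleteNormedModule). intros; apply gg_cont. Qed.

Definition KK := 2 * (INR (length idx) * L + 1).
Definition cc := lsum idx (F v0) / KK.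

Lemma KK_pos : 0 < KK.
Proof. unfold KK. pose proof (pos_INR (length idx)). nra. Qed.

Lemma cc_ge0 : 0 <= cc.
Proof. unfold cc. pose proof KK_pos. pose proof (lsum_ge0 idx (F v0)). apply Rdiv_le_0_compat; lra. Qed.

Lemma pic_diff m t i : pic (S (S m)) t i - pic (S m) t i = RInt (fun s => gg (S m) i s - gg m i s) 0 t.
Proof. rewrite RInt_minus' by apply gg_int. unfold gg. simpl. ring. Qed.

Lemma coord_step m : (forall s, 0 <= s -> lsum idx (fun k => pic (S m) s k - pic m s k) <= cc * exp (KK*s) * (/2)^m) ->
  forall t i, 0 <= t -> Rabs (pic (S (S m)) t i - pic (S m) t i) <= L * cc * (/2)^m / KK * exp (KK * t).
Proof.
 intros IH t i Ht. rewrite pic_diff.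
 pose proof KK_pos as HK. pose proof cc_ge0 as Hc.
 eapply Rle_trans. apply (RInt_abs_le _ (fun s => (L * cc * (/2)^m) * exp (KK*s))); auto.
 - apply ex_RInt_minus'; apply gg_int.
 - apply (@ex_RInt_continuous R_CompleteNormedModule). intros. apply (ex_derive_continuous (fun s => L * cc * (/ 2) ^ m * exp (KK * s))). auto_derive. auto.
 - intros s Hs. unfold gg. eapply Rle_trans. apply HL. specialize (IH s ltac:(lra)).
   pose proof (pow_le (/2) m ltac:(lra)). nra.
 - rewrite RInt_exp by auto.
   assert (0 <= L * cc * (/2)^m / KK). { apply Rdiv_le_0_compat; [|lra]. pose proof (pow_le (/2) m ltac:(lra)). apply Rmult_le_pos; [apply Rmult_le_pos|]; auto. }
   nra.
Qed.

Lemma Dbound m : forall t, 0 <= t -> lsum idx (fun k => pic (S m) t k - pic m t k) <= cc * exp (KK*t) * (/2)^m.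
Proof.
 pose proof KK_pos as HK. pose proof cc_ge0 as Hc.
 induction m; intros t Ht.
 - simpl. rewrite (lsum_ext _ _ (fun k => (t - 0) * F v0 k)).
   2:{ intros k. rewrite RInt_const. unfold scal; simpl. unfold mult; simpl. ring. }
   rewrite lsum_scal. rewrite Rabs_pos_eq by lra. unfold cc.
   pose proof (exp_ge (KK*t)). pose proof (lsum_ge0 idx (F v0)).
   assert (t <= exp (KK*t) / KK). { apply (Rmult_le_reg_l KK); auto. field_simplify; lra. }
   replace (lsum idx (F v0) / KK * exp (KK * t) * 1) with (lsum idx (F v0) * (exp (KK*t) / KK)) by (field; lra).
   nra.
 - pose proof (coord_step m IHm t) as Hc'.
   eapply Rle_trans. apply lsum_le_len. intros i. apply (Hc' i Ht).
   assert (HLK : INR (length idx) * L <= KK / 2) by (unfold KK; lra).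
   pose proof (exp_pos (KK*t)). pose proof (pow_le (/2) m ltac:(lra)).
   simpl pow.
   replace (INR (length idx) * (L * cc * (/ 2) ^ m / KK * exp (KK * t)))
     with ((INR (length idx) * L) * (cc * (/ 2) ^ m * exp (KK * t) / KK)) by (field; lra).
   assert (0 <= cc * (/ 2) ^ m * exp (KK * t) / KK).
   { apply Rdiv_le_0_compat; [|lra]. apply Rmult_le_pos; [apply Rmult_le_pos|]; lra. }
   apply Rle_trans with (KK/2 * (cc * (/ 2) ^ m * exp (KK * t) / KK)). { apply Rmult_le_compat_r; auto. }
   right. field. lra.
Qed.

Lemma Npic m r : 0 <= r -> lsum idx (fun k => pic m r k - v0 k) <= 2 * cc * exp (KK*r) * (1 - (/2)^m).
Proof.
 pose proof cc_ge0. pose proof (exp_pos (KK*r)).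
 induction m; intros Hr.
 - simpl. rewrite (lsum_ext _ _ (fun k => 0 * 0)). 2:{ intros; ring. }
   rewrite lsum_scal, Rabs_R0. lra.
 - eapply Rle_trans. apply (lsum_triang idx (pic (S m) r) (pic m r) v0).
   pose proof (Dbound m r Hr). specialize (IHm Hr). simpl pow. lra.
Qed.

Definition Bc' T i := Rabs (F v0 i) + L * (2 * cc * exp (KK*T)).

Lemma gg_bound m i T r : 0 <= r <= T -> Rabs (gg m i r) <= Bc' T i.
Proof.
 intros Hr. unfold gg, Bc'. pose proof cc_ge0. pose proof KK_pos.
 replace (F (pic m r) i) with (F v0 i + (F (pic m r) i - F v0 i)) by ring.
 eapply Rle_trans; [apply Rabs_triang|]. apply Rplus_le_compat_l.
 eapply Rle_trans; [apply HL|]. apply Rmult_le_compat_l; auto.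
 eapply Rle_trans; [apply (Npic m r ltac:(lra))|].
 assert (exp (KK*r) <= exp (KK*T)). { apply exp_le_exp'. nra. }
 pose proof (pow_le (/2) m ltac:(lra)). pose proof (exp_pos (KK*r)).
 assert (0 <= 2*cc*exp(KK*r) * (/2)^m) by (apply Rmult_le_pos; [apply Rmult_le_pos; [apply Rmult_le_pos|]|]; lra).
 nra.
Qed.

Lemma Rint_lip f a b B : ex_RInt f a b -> (forall r, Rmin a b <= r <= Rmax a b -> Rabs (f r) <= B) ->
  Rabs (RInt f a b) <= B * Rabs (b - a).
Proof.
 intros Hf H. destruct (Rle_dec a b) as [Hab|Hab].
 - rewrite (Rabs_pos_eq (b - a)) by lra. rewrite Rmult_comm. apply abs_RInt_le_const; auto.
   intros; apply H. rewrite Rmin_left, Rmax_right; lra.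
 - rewrite <- (opp_RInt_swap f b a) by (apply ex_RInt_swap; auto).
   change (opp (RInt f b a)) with (- RInt f b a). rewrite Rabs_Ropp.
   rewrite (Rabs_left (b - a)) by lra. replace (- (b - a)) with (a - b) by ring.
   rewrite Rmult_comm. apply abs_RInt_le_const; [lra| apply ex_RInt_swap; auto|].
   intros; apply H. rewrite Rmin_right, Rmax_left; lra.
Qed.

Lemma pic_lip m i T s t : 0 <= s <= T -> 0 <= t <= T ->
  Rabs (pic (S m) t i - pic (S m) s i) <= Bc' T i * Rabs (t - s).
Proof.
 intros Hs Ht. simpl.
 replace (v0 i + RInt (fun s0 => F (pic m s0) i) 0 t - (v0 i + RInt (fun s0 => F (pic m s0) i) 0 s))
   with (RInt (gg m i) s t).
 2:{ pose proof (RInt_Chasles (gg m i) 0 s t (gg_int _ _ _ _) (gg_int _ _ _ _)) as E. unfold plus in E; simpl in E. unfold gg in *. lra. }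
 apply Rint_lip. apply gg_int. intros r Hr. apply gg_bound.
 split. { apply Rle_trans with (Rmin s t); [apply Rmin_glb|]; lra. }
 apply Rle_trans with (Rmax s t); [lra|apply Rmax_lub; lra].
Qed.

Definition AA T := L * cc / KK * exp (KK*T).

Lemma AA_ge0 T : 0 <= AA T.
Proof. unfold AA. pose proof cc_ge0; pose proof KK_pos; pose proof (exp_pos (KK*T)).
 apply Rmult_le_pos; [|lra]. apply Rdiv_le_0_compat; [apply Rmult_le_pos|]; lra. Qed.

Lemma pic_step m i T t : 0 <= t <= T -> Rabs (pic (S (S m)) t i - pic (S m) t i) <= AA T * (/2)^m.
Proof.
 intros Ht. eapply Rle_trans. apply (coord_step m (Dbound m) t i ltac:(lra)).
 unfold AA. pose proof cc_ge0; pose proof KK_pos.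
 assert (exp (KK*t) <= exp (KK*T)). { apply exp_le_exp'. nra. }
 pose proof (pow_le (/2) m ltac:(lra)).
 replace (L * cc / KK * exp (KK * T) * (/ 2) ^ m) with ((L * cc * (/2)^m / KK) * exp (KK*T)) by (field; lra).
 apply Rmult_le_compat_l; auto. apply Rdiv_le_0_compat; [|lra]. apply Rmult_le_pos; [apply Rmult_le_pos|]; lra.
Qed.

Lemma Rmax_idem0 t : Rmax 0 (Rmax 0 t) = Rmax 0 t.
Proof. unfold Rmax. destruct (Rle_dec 0 t); destruct (Rle_dec 0 _); lra. Qed.

Lemma Rmax_lip0 s t : Rabs (Rmax 0 t - Rmax 0 s) <= Rabs (t - s).
Proof. unfold Rmax. destruct (Rle_dec 0 t); destruct (Rle_dec 0 s);
 unfold Rabs; repeat destruct Rcase_abs; lra. Qed.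

Definition xsol t i := real (Lim_seq (fun n => pic (S n) (Rmax 0 t) i)).

Lemma x_tail T t i n : 0 <= t <= T -> Rabs (xsol t i - pic (S n) t i) <= 2 * AA T * (/2)^n.
Proof.
 intros Ht. destruct (seq_lim (fun n => pic (S n) t i) (AA T)) as [l [E B]].
 { intros k. apply pic_step; auto. }
 unfold xsol. rewrite (Rmax_right 0 t) by lra. rewrite E. simpl. apply B.
Qed.

Lemma Bc'_ge0 T i : 0 <= Bc' T i.
Proof. unfold Bc'. pose proof cc_ge0. pose proof (exp_pos (KK*T)). pose proof (Rabs_pos (F v0 i)).
 assert (0 <= 2 * cc * exp (KK*T)) by (apply Rmult_le_pos; [apply Rmult_le_pos|]; lra). nra. Qed.

Lemma x_lip01 T i s t : 0 <= s <= T -> 0 <= t <= T -> Rabs (xsol t i - xsol s i) <= Bc' T i * Rabs (t - s).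
Proof.
 intros Hs Ht. apply (le_geom _ _ (4 * AA T)). intros n.
 pose proof (x_tail T t i n Ht). pose proof (x_tail T s i n Hs). pose proof (pic_lip n i T s t Hs Ht).
 replace (xsol t i - xsol s i) with ((xsol t i - pic (S n) t i) + (pic (S n) t i - pic (S n) s i) + - (xsol s i - pic (S n) s i)) by ring.
 eapply Rle_trans. apply Rabs_triang. rewrite Rabs_Ropp.
 eapply Rle_trans. apply Rplus_le_compat_r. apply Rabs_triang. lra.
Qed.

Lemma x_clamp t i : xsol t i = xsol (Rmax 0 t) i.
Proof. unfold xsol. rewrite Rmax_idem0. reflexivity. Qed.

Lemma x_lip T i : exists B, 0 <= B /\ forall s t, s <= T -> t <= T -> Rabs (xsol t i - xsol s i) <= B * Rabs (t - s).
Proof.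
 exists (Bc' (Rmax 0 T) i). split; [apply Bc'_ge0|]. intros s t Hs Ht.
 rewrite (x_clamp t), (x_clamp s).
 eapply Rle_trans. apply x_lip01.
 - split; [apply Rmax_l|]. apply Rmax_lub; [apply Rmax_l| eapply Rle_trans; [exact Hs|apply Rmax_r]].
 - split; [apply Rmax_l|]. apply Rmax_lub; [apply Rmax_l| eapply Rle_trans; [exact Ht|apply Rmax_r]].
 - apply Rmult_le_compat_l; [apply Bc'_ge0|apply Rmax_lip0].
Qed.

Lemma x_cont i t : continuity_pt (fun s => xsol s i) t.
Proof.
 destruct (x_lip (t+1) i) as [B [HB H]].
 intros eps He. exists (Rmin 1 (eps/(B+1))). split. { apply Rmin_pos; [lra|apply Rdiv_lt_0_compat; lra]. }
 intros s [_ Hs]. simpl in *. unfold R_dist in *.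
 assert (H1 : Rabs (s - t) < 1) by (eapply Rlt_le_trans; [exact Hs|apply Rmin_l]).
 assert (H2 : Rabs (s - t) < eps/(B+1)) by (eapply Rlt_le_trans; [exact Hs|apply Rmin_r]).
 assert (s <= t + 1) by (apply Rabs_lt_between in H1; lra).
 eapply Rle_lt_trans. apply (H t s); lra.
 apply Rle_lt_trans with ((B+1) * Rabs (s - t)). { pose proof (Rabs_pos (s-t)). nra. }
 apply (Rmult_lt_compat_l (B+1)) in H2; [|lra]. replace ((B+1)*(eps/(B+1))) with eps in H2 by (field; lra). lra.
Qed.

Lemma x_zero i : xsol 0 i = v0 i.
Proof.
 unfold xsol. rewrite (Lim_seq_ext _ (fun _ => v0 i)).
 - rewrite Lim_seq_const. reflexivity.
 - intros n. simpl. rewrite Rmax_left by lra. rewrite RInt_point. unfold zero; simpl. ring.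
Qed.

Lemma G_cont i t : continuous (fun s => F (xsol s) i) t.
Proof. apply (cont_conv (fun s => F (xsol s) i)). exact (F_cont xsol t (fun k => x_cont k t) i). Qed.

Lemma G_int i a b : ex_RInt (fun s => F (xsol s) i) a b.
Proof. apply (@ex_RInt_continuous R_CompleteNormedModule). intros; apply G_cont. Qed.

Lemma x_int t i : 0 <= t -> xsol t i = v0 i + RInt (fun s => F (xsol s) i) 0 t.
Proof.
 intros Ht.
 assert (Rabs (xsol t i - (v0 i + RInt (fun s => F (xsol s) i) 0 t)) <= 0).
 2:{ pose proof (Rabs_pos (xsol t i - (v0 i + RInt (fun s => F (xsol s) i) 0 t))).
     assert (Rabs (xsol t i - (v0 i + RInt (fun s => F (xsol s) i) 0 t)) = 0) by lra.
     apply Rabs_eq_0 in H1. lra. }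
 apply (le_geom _ _ (2 * AA t + t * (L * (INR (length idx) * (2 * AA t))))). intros n.
 assert (E : pic (S (S n)) t i = v0 i + RInt (gg (S n) i) 0 t) by reflexivity.
 pose proof (x_tail t t i (S n) ltac:(lra)) as H1.
 assert (H2 : Rabs (RInt (fun s => gg (S n) i s - F (xsol s) i) 0 t) <= (t - 0) * (L * (INR (length idx) * (2 * AA t * (/2)^n)))).
 { apply abs_RInt_le_const; [lra| apply ex_RInt_minus'; [apply gg_int|apply G_int]|].
   intros r Hr. unfold gg. eapply Rle_trans. apply HL. apply Rmult_le_compat_l; auto.
   apply lsum_le_len. intros k. rewrite <- Rabs_Ropp. replace (- (pic (S n) r k - xsol r k)) with (xsol r k - pic (S n) r k) by ring.
   apply x_tail. lra. }
 rewrite (RInt_minus' (gg (S n) i) (fun s => F (xsol s) i) 0 t (gg_int _ _ _ _) (G_int _ _ _)) in H2.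
 replace (xsol t i - (v0 i + RInt (fun s => F (xsol s) i) 0 t)) with
   ((xsol t i - pic (S (S n)) t i) + (RInt (gg (S n) i) 0 t - RInt (fun s => F (xsol s) i) 0 t)) by (rewrite E; ring).
 eapply Rle_trans. apply Rabs_triang.
 simpl pow in H1. pose proof (AA_ge0 t). pose proof (pow_le (/2) n ltac:(lra)).
 assert (H3: 2 * AA t * (/2 * (/2)^n) <= 2 * AA t * (/2)^n) by nra.
 replace ((t - 0) * (L * (INR (length idx) * (2 * AA t * (/ 2) ^ n)))) with (t * (L * (INR (length idx) * (2 * AA t))) * (/2)^n) in H2 by ring.
 lra.
Qed.

Lemma x_deriv t i : 0 < t -> derivable_pt_lim (fun s => xsol s i) t (F (xsol t) i).
Proof.
 intros Ht. apply is_derive_Reals.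
 apply (is_derive_ext_loc (fun s => v0 i + RInt (fun s => F (xsol s) i) 0 s)).
 - exists (mkposreal t Ht). intros y Hy. unfold ball in Hy; simpl in Hy.
   unfold AbsRing_ball, abs, minus, plus, opp in Hy; simpl in Hy.
   apply Rabs_lt_between in Hy. rewrite (x_int y i) by lra. reflexivity.
 - assert (H : is_derive (fun s => v0 i + RInt (fun s => F (xsol s) i) 0 s) t (plus zero (F (xsol t) i))).
   { apply (is_derive_plus (fun _ => v0 i) (fun s => RInt (fun s => F (xsol s) i) 0 s)).
     - exact (@is_derive_const R_AbsRing R_NormedModule (v0 i) t).
     - apply (is_derive_RInt (fun s => F (xsol s) i) _ 0).
       + apply filter_forall. intros b. apply (RInt_correct (fun s => F (xsol s) i) 0 b). apply G_int.
       + apply G_cont. }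
   rewrite plus_zero_l in H. exact H.
Qed.

End Picard.

Theorem ode_exists {I : Type} (idx : list I) (F : (I -> R) -> (I -> R)) (L : R) :
  0 <= L -> (forall a b i, Rabs (F a i - F b i) <= L * lsum idx (fun k => a k - b k)) ->
  forall v0 : I -> R, exists x : R -> I -> R,
    (forall i, x 0 i = v0 i) /\
    (forall t i, 0 < t -> derivable_pt_lim (fun s => x s i) t (F (x t) i)) /\
    (forall T i, exists B, 0 <= B /\ forall s t, s <= T -> t <= T -> Rabs (x t i - x s i) <= B * Rabs (t - s)).
Proof.
 intros HL0 HL v0. exists (xsol F v0). split; [|split].
 - intros; apply x_zero.
 - intros. eapply x_deriv; eauto.
 - intros. eapply x_lip; eauto.
Qed.

Definition Lip (u : R -> R) : Prop :=
  forall T, exists B, 0 <= B /\ forall s t, s <= T -> t <= T -> Rabs (u t - u s) <= B * Rabs (t - s).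

Lemma Lip_shift u a : Lip u -> Lip (fun s => u (s - a)).
Proof.
 intros H T. destruct (H (T - a)) as [B [HB H1]]. exists B. split; auto.
 intros s t Hs Ht. replace (t - s) with ((t - a) - (s - a)) by ring. apply H1; lra.
Qed.

Lemma Lip_const c : Lip (fun _ => c).
Proof. intros T. exists 0. split; [lra|]. intros. unfold Rminus; rewrite Rplus_opp_r, Rabs_R0. lra. Qed.

Lemma rsum_lip (u : R -> R) B m (lo hi : nat -> R) :
  (forall k, (k < m)%nat -> Rabs (u (hi k) - u (lo k)) <= B * (hi k - lo k)) ->
  rsum m (fun k => Rabs (u (hi k) - u (lo k))) <= B * rsum m (fun k => hi k - lo k).
Proof.
 induction m; intros H; simpl; [lra|].
 rewrite Rmult_plus_distr_l. apply Rplus_le_compat; [apply IHm; intros; apply H; lia| apply H; lia].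
Qed.

Lemma Lip_abscont u a b : Lip u -> AbsContOn a b u.
Proof.
 intros H eps He. destruct (H b) as [B [HB H1]].
 exists (eps / (B+1)). split; [apply Rdiv_lt_0_compat; lra|].
 intros m lo hi Hk _ Hs.
 eapply Rle_lt_trans. apply (rsum_lip u B).
 - intros k Hkm. destruct (Hk k Hkm) as [A1 [A2 A3]].
   rewrite <- (Rabs_pos_eq (hi k - lo k)) by lra. apply H1; lra.
 - apply Rle_lt_trans with (B * (eps/(B+1))).
   + apply Rmult_le_compat_l; lra.
   + apply Rlt_le_trans with ((B+1) * (eps/(B+1))); [|right; field; lra].
     apply Rmult_lt_compat_r; [apply Rdiv_lt_0_compat|]; lra.
Qed.

Lemma Lip_loc u T : Lip u -> LocAbsCont T u.
Proof. intros H a b _ _. apply Lip_abscont; auto. Qed.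

Lemma NullSet_two a b : NullSet (fun t => t = a \/ t = b).
Proof.
 intros eps He.
 exists (fun n => match n with O => a - eps/8 | 1%nat => b - eps/8 | _ => 0 end).
 exists (fun n => match n with O => a + eps/8 | 1%nat => b + eps/8 | _ => 0 end).
 split; [|split].
 - intros [|[|n]]; lra.
 - intros t [->| ->]; [exists O|exists 1%nat]; simpl; lra.
 - intros m. destruct m as [|[|m]]; simpl; [lra|lra|].
   assert (forall k, rsum (S (S k)) (fun n => match n with O => a + eps/8 | 1%nat => b + eps/8 | _ => 0 end -
       match n with O => a - eps/8 | 1%nat => b - eps/8 | _ => 0 end) = eps/2).
   { induction k; simpl in *; [lra|]. rewrite IHk. lra. }
   specialize (H m). simpl in H. lra.
Qed.

Lemma NullSet_one a : NullSet (fun t => t = a).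
Proof. intros eps He. destruct (NullSet_two a a eps He) as [lo [hi [H1 [H2 H3]]]].
 exists lo, hi. split; [|split]; auto. Qed.

Lemma dpl_shift u a t l : derivable_pt_lim u (t - a) l -> derivable_pt_lim (fun s => u (s - a)) t l.
Proof.
 intros H eps He. destruct (H eps He) as [d Hd]. exists d. intros h Hh Hhd.
 replace (t + h - a) with (t - a + h) by ring. apply Hd; auto.
Qed.

Lemma HFD_shift P zt t a : HasFlowDeriv P zt (t - a) -> HasFlowDeriv P (fun s => zt (s - a)) t.
Proof.
 intros [H1 [H2 [H3 H4]]]. split; [|split; [|split]].
 - intros i j E. apply (dpl_shift (fun s => eta (zt s) i j)). auto.
 - intros j Hj. destruct (H2 j Hj) as [l [Hl Hm]]. exists l. split; auto.
   apply (dpl_shift (fun s => om (zt s) j)). auto.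
 - intros j k Hj Hk. apply (dpl_shift (fun s => xs (zt s) j k)). auto.
 - intros j Hj. apply (dpl_shift (fun s => IZR (sg (zt s) j))). auto.
Qed.

Definition Good (lo hi w : R) (s : Z) : Prop :=
  (s = 0%Z /\ Rabs w <= hi) \/ (s = sgn w /\ lo <= Rabs w).

Lemma sgn_cases w : (sgn w = 1%Z /\ 0 <= w) \/ (sgn w = (-1)%Z /\ w < 0).
Proof. unfold sgn. destruct (Rle_dec 0 w); [left|right]; split; auto; lra. Qed.

Lemma InI_Good lo hi w s : lo < hi -> InI lo hi w s -> Good lo hi w s.
Proof.
 intros Hl [A [B C]]. unfold Good.
 destruct (Rlt_dec hi (Rabs w)) as [H1|H1].
 - right. split; auto; lra.
 - destruct (Rlt_dec (Rabs w) lo) as [H2|H2].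
   + left. split; auto; lra.
   + destruct (C ltac:(lra)) as [->| ->]; [left|right]; split; auto; lra.
Qed.

Lemma Good_InI lo hi w s : 0 < lo -> lo < hi -> Good lo hi w s -> InI lo hi w s.
Proof.
 intros H0 Hl [[-> Hw]|[-> Hw]]; unfold InI; repeat split; intros; try lra; auto.
Qed.

Definition mgv (lo hi w : R) (s : Z) : R :=
  match s with
  | Z0 => hi - Rabs w
  | Zpos xH => w - lo
  | Zneg xH => - w - lo
  | _ => -1
  end.

Lemma Good_mgv lo hi w s : 0 < lo -> Good lo hi w s -> 0 <= mgv lo hi w s.
Proof.
 intros H0 [[-> Hw]|[-> Hw]]; simpl; [lra|].
 destruct (sgn_cases w) as [[-> Hw']|[-> Hw']]; simpl.
 - rewrite Rabs_pos_eq in Hw; lra.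
 - rewrite Rabs_left in Hw; lra.
Qed.

Lemma mgv_Good lo hi w s : 0 < lo -> 0 <= mgv lo hi w s -> Good lo hi w s.
Proof.
 intros H0 H. unfold Good. destruct s as [|p|p]; simpl in H.
 - left; split; auto; lra.
 - destruct p; try lra. right. assert (0 <= w) by lra. unfold sgn.
   destruct (Rle_dec 0 w); [|lra]. split; auto. rewrite Rabs_pos_eq; lra.
 - destruct p; try lra. right. assert (w < 0) by lra. unfold sgn.
   destruct (Rle_dec 0 w); [lra|]. split; auto. rewrite Rabs_left; lra.
Qed.

Lemma mgv_zero lo hi w s : 0 < lo -> Good lo hi w s -> mgv lo hi w s = 0 ->
  (Rabs w = hi /\ s = 0%Z) \/ (Rabs w = lo /\ s = sgn w).
Proof.
 intros H0 [[-> Hw]|[-> Hw]] E; simpl in E; [left; split; auto; lra|].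
 right. split; auto. destruct (sgn_cases w) as [[Hs Hw']|[Hs Hw']]; rewrite Hs in E; simpl in E.
 - rewrite Rabs_pos_eq; lra.
 - rewrite Rabs_left; lra.
Qed.

Lemma mgv_lip lo hi s w w' : Rabs (mgv lo hi w s - mgv lo hi w' s) <= Rabs (w - w').
Proof.
 destruct s as [|p|p]; simpl.
 - replace (hi - Rabs w - (hi - Rabs w')) with (- (Rabs w - Rabs w')) by ring.
   rewrite Rabs_Ropp. apply Rabs_triang_inv2.
 - destruct p; try (unfold Rminus at 1; rewrite Rplus_opp_r, Rabs_R0; apply Rabs_pos).
   right. f_equal. ring.
 - destruct p; try (unfold Rminus at 1; rewrite Rplus_opp_r, Rabs_R0; apply Rabs_pos).
   replace (- w - lo - (- w' - lo)) with (- (w - w')) by ring. rewrite Rabs_Ropp. lra.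
Qed.

Lemma gsig_Good lo hi w s : lo < hi -> Good lo hi w s -> Good lo hi w (gsig lo hi w s).
Proof.
 intros Hl HG. unfold gsig.
 destruct (Req_EM_T (Rabs w) hi) as [E1|E1]; destruct (Z.eq_dec s 0) as [E2|E2];
 try (right; split; [reflexivity|lra]);
 destruct (Req_EM_T (Rabs w) lo) as [E3|E3]; destruct (Z.eq_dec s (sgn w)) as [E4|E4];
 try (left; split; [reflexivity|lra]); auto.
Qed.

Lemma Rmin_lip a b c d : Rabs (Rmin a b - Rmin c d) <= Rabs (a - c) + Rabs (b - d).
Proof. unfold Rmin. destruct (Rle_dec a b); destruct (Rle_dec c d);
 unfold Rabs; repeat destruct Rcase_abs; lra. Qed.

Lemma Rabs_le_between x y : Rabs x <= y -> - y <= x <= y.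
Proof. unfold Rabs; destruct Rcase_abs; lra. Qed.

Section Hyb.
Context (P : Net) (HP : NetAssumptions P) (flw : HState -> R -> HState)
  (FP0 : forall z, flw z 0 = z)
  (FPsg : forall z t, sg (flw z t) = sg z)
  (FPder : forall z t, 0 < t -> HasFlowDeriv P (flw z) t)
  (FPeta : forall z i j, Lip (fun t => eta (flw z t) i j))
  (FPom : forall z j, Lip (fun t => om (flw z t) j))
  (FPxs : forall z j k, Lip (fun t => xs (flw z t) j k)).

Lemma w0_pos j : (j < nN P)%nat -> 0 < w0 P j /\ w0 P j < w1 P j.
Proof. destruct HP as [_ [_ [_ [_ [_ [_ [H _]]]]]]]. apply H. Qed.

Definition mg (z : HState) (j : nat) : R := mgv (w0 P j) (w1 P j) (om z j) (sg z j).

Fixpoint muN (n : nat) (z : HState) : R :=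
  match n with O => 1 | S n' => Rmin (mg z n') (muN n' z) end.

Definition mu z := muN (nN P) z.

Lemma muN_ge0 n z : 0 <= muN n z <-> forall j, (j < n)%nat -> 0 <= mg z j.
Proof.
 induction n; simpl.
 - split; intros; [lia|lra].
 - split.
   + intros H j Hj. unfold Rmin in H. destruct (Rle_dec (mg z n) (muN n z)).
     * destruct (Nat.eq_dec j n) as [->|]; [auto|]. apply IHn; [lra|lia].
     * destruct (Nat.eq_dec j n) as [->|]; [lra|]. apply IHn; [auto|lia].
   + intros H. apply Rmin_glb; [apply H; lia|]. apply IHn. intros; apply H; lia.
Qed.

Lemma muN_le0 n z : muN n z <= 0 -> exists j, (j < n)%nat /\ mg z j = muN n z.
Proof.
 induction n; simpl; intros H; [lra|].
 unfold Rmin in *. destruct (Rle_dec (mg z n) (muN n z)).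
 - exists n; split; auto.
 - destruct (IHn ltac:(lra)) as [j [Hj E]]. exists j; split; auto.
Qed.

Lemma Lambda_mu z : InLambda P z <-> 0 <= mu z.
Proof.
 unfold mu. rewrite muN_ge0. split.
 - intros H j Hj. destruct (w0_pos j Hj). apply Good_mgv; auto. apply InI_Good; auto.
 - intros H j Hj. destruct (w0_pos j Hj). apply Good_InI; auto. apply mgv_Good; auto. apply H; auto.
Qed.

Lemma mu_zero_D z : mu z = 0 -> InD P z.
Proof.
 intros H. assert (HL : InLambda P z) by (apply Lambda_mu; lra). split; auto.
 destruct (muN_le0 (nN P) z ltac:(unfold mu in H; lra)) as [j [Hj E]].
 exists j. split; auto. destruct (w0_pos j Hj).
 apply (mgv_zero (w0 P j) (w1 P j)); auto.
 - apply InI_Good; auto.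
 - unfold mg in E. unfold mu in H. lra.
Qed.

Lemma muN_lip z n : Lip (fun t => muN n (flw z t)).
Proof.
 induction n; simpl.
 - apply Lip_const.
 - intros T. destruct (IHn T) as [B2 [HB2 H2]]. destruct (FPom z n T) as [B1 [HB1 H1]].
   exists (B1 + B2). split; [lra|]. intros s t Hs Ht.
   eapply Rle_trans. apply Rmin_lip. unfold mg. rewrite !FPsg.
   eapply Rle_trans. apply Rplus_le_compat_r. apply mgv_lip.
   specialize (H1 s t Hs Ht). specialize (H2 s t Hs Ht). lra.
Qed.

Lemma mu_lip z : Lip (fun t => mu (flw z t)).
Proof. apply muN_lip. Qed.

Definition hitE z := fun u => exists t, 0 <= t /\ mu (flw z t) <= 0 /\ u = - t.

Lemma hitE_bound z : bound (hitE z).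
Proof. exists 0. intros u [t [Ht [_ ->]]]. lra. Qed.

Lemma hitE_ne z : (exists t, 0 <= t /\ mu (flw z t) <= 0) -> exists u, hitE z u.
Proof. intros [t [Ht Hm]]. exists (-t), t. auto. Qed.

Definition hit (z : HState) : option R :=
  match excluded_middle_informative (exists t, 0 <= t /\ mu (flw z t) <= 0) with
  | left H => Some (- proj1_sig (completeness (hitE z) (hitE_bound z) (hitE_ne z H)))
  | right _ => None
  end.

Lemma hit_some z tau : hit z = Some tau ->
  0 <= tau /\ (forall t, 0 <= t < tau -> 0 < mu (flw z t)) /\ mu (flw z tau) <= 0.
Proof.
 unfold hit. destruct (excluded_middle_informative _) as [H|H]; [|discriminate].
 destruct (completeness _ _ _) as [m [Hub Hlub]]. simpl. intros E. injection E as <-.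
 assert (Hm : m <= 0). { apply Hlub. intros u [t [Ht [_ ->]]]. lra. }
 assert (Hlt : forall t, 0 <= t < - m -> 0 < mu (flw z t)).
 { intros t Ht. destruct (Rlt_dec 0 (mu (flw z t))) as [|Hn]; auto.
   assert (- t <= m) by (apply Hub; exists t; repeat split; lra). lra. }
 split; [lra|]. split; auto.
 destruct (Rle_dec (mu (flw z (-m))) 0) as [|Hn]; auto. exfalso. apply Rnot_le_lt in Hn.
 destruct (mu_lip z (- m + 1)) as [B [HB HL]].
 set (d := mu (flw z (-m))). set (e := Rmin 1 (d / (B+1))).
 assert (He : 0 < e). { apply Rmin_pos; [lra|apply Rdiv_lt_0_compat; [exact Hn|lra]]. }
 assert (Hpos : forall t, - m <= t < - m + e -> 0 < mu (flw z t)).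
 { intros t Ht. pose proof (Rmin_l 1 (d/(B+1))) as R1. pose proof (Rmin_r 1 (d/(B+1))) as R2. fold e in R1, R2.
   assert (Tt : t <= -m + 1) by lra.
   specialize (HL (-m) t ltac:(lra) Tt).
   assert (X : B * Rabs (t - - m) < d).
   { rewrite Rabs_pos_eq by lra. assert (X2 : t - - m < d/(B+1)) by lra.
     apply Rle_lt_trans with ((B+1) * (t - - m)); [nra|].
     apply (Rmult_lt_compat_l (B+1)) in X2; [|lra]. replace ((B+1)*(d/(B+1))) with d in X2 by (field; lra). lra. }
   apply Rabs_le_between in HL. fold d in HL. lra. }
 assert (m <= - (- m + e)).
 { apply Hlub. intros u [t [Ht [Hmu ->]]].
   destruct (Rlt_dec t (-m)) as [Ht1|Ht1]; [specialize (Hlt t ltac:(lra)); lra|].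
   destruct (Rlt_dec t (-m + e)) as [Ht2|Ht2]; [specialize (Hpos t ltac:(lra)); lra|]. lra. }
 lra.
Qed.

Lemma hit_none z : hit z = None -> forall t, 0 <= t -> 0 < mu (flw z t).
Proof.
 unfold hit. destruct (excluded_middle_informative _) as [H|H]; [discriminate|].
 intros _ t Ht. destruct (Rlt_dec 0 (mu (flw z t))); auto. exfalso. apply H. exists t. split; auto. lra.
Qed.

Lemma hit_zero z tau : InLambda P z -> hit z = Some tau -> mu (flw z tau) = 0.
Proof.
 intros HL Hh. destruct (hit_some z tau Hh) as [H0 [H1 H2]].
 apply Rle_antisym; auto.
 destruct (Rle_dec 0 (mu (flw z tau))) as [|Hn]; auto. exfalso. apply Rnot_le_lt in Hn.
 destruct (Req_dec tau 0) as [E|E].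
 - rewrite E, FP0 in Hn. apply Lambda_mu in HL. lra.
 - destruct (mu_lip z tau) as [B [HB HLp]].
   remember (- mu (flw z tau)) as d eqn:Ed.
   remember (Rmax 0 (tau - d / (2*(B+1)))) as t eqn:Et.
   assert (Hd : 0 < d) by lra.
   assert (Hq : 0 < d / (2*(B+1))) by (apply Rdiv_lt_0_compat; lra).
   assert (Ht : 0 <= t < tau). { rewrite Et. split; [apply Rmax_l|]. apply Rmax_lub_lt; lra. }
   assert (Ht2 : tau - t <= d / (2*(B+1))). { rewrite Et. pose proof (Rmax_r 0 (tau - d / (2*(B+1)))). lra. }
   specialize (H1 t Ht). specialize (HLp t tau ltac:(lra) ltac:(lra)).
   rewrite (Rabs_pos_eq (tau - t)) in HLp by lra.
   assert (B * (tau - t) <= B * (d / (2*(B+1)))) by (apply Rmult_le_compat_l; lra).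
   assert (B * (d / (2*(B+1))) < d). { apply Rlt_le_trans with ((B+1) * (d/(2*(B+1)))); [nra|]. replace ((B+1) * (d/(2*(B+1)))) with (d/2) by (field; lra). lra. }
   apply Rabs_le_between in HLp. lra.
Qed.

Lemma flw_Lambda z t : 0 <= mu (flw z t) -> InLambda P (flw z t).
Proof. intros H; apply Lambda_mu; auto. Qed.

Lemma gmap_Lambda z : InLambda P z -> InLambda P (gmap P z).
Proof.
 intros H j Hj. unfold gmap; simpl. rewrite (proj2 (Nat.ltb_lt _ _) Hj).
 destruct (w0_pos j Hj). apply Good_InI; auto. apply gsig_Good; auto. apply InI_Good; auto.
Qed.

Lemma Lip_ext u v : (forall t, u t = v t) -> Lip v -> Lip u.
Proof. intros E H T. destruct (H T) as [B [HB H1]]. exists B. split; auto. intros. rewrite !E. auto. Qed.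

Context (z0 : HState) (Hz0 : InLambda P z0).

Fixpoint st (l : nat) : R * HState :=
  match l with
  | O => (0, z0)
  | S l' => let p := st l' in
      match hit (snd p) with Some tau => (fst p + tau, gmap P (flw (snd p) tau)) | None => p end
  end.

Definition alive l := forall k, (k < l)%nat -> hit (snd (st k)) <> None.

Lemma st_S_some l tau : hit (snd (st l)) = Some tau -> st (S l) = (fst (st l) + tau, gmap P (flw (snd (st l)) tau)).
Proof. intros E. simpl. rewrite E. reflexivity. Qed.

Lemma st_S_none l : hit (snd (st l)) = None -> st (S l) = st l.
Proof. intros E. simpl. rewrite E. reflexivity. Qed.

Lemma st_inv l : alive l -> InLambda P (snd (st l)) /\ 0 <= fst (st l).
Proof.
 induction l; intros Ha.
 - simpl. split; [auto|lra].
 - assert (Ha' : alive l) by (intros k Hk; apply Ha; lia).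
   destruct (IHl Ha') as [HL Ht].
   specialize (Ha l (Nat.lt_succ_diag_r l)).
   destruct (hit (snd (st l))) as [tau|] eqn:Eh; [|contradiction].
   rewrite (st_S_some l tau Eh). simpl. destruct (hit_some _ _ Eh) as [H0 _]. split; [|lra].
   apply gmap_Lambda. apply Lambda_mu. rewrite (hit_zero _ _ HL Eh). lra.
Qed.

Lemma tt_mono l : fst (st l) <= fst (st (S l)).
Proof.
 destruct (hit (snd (st l))) as [tau|] eqn:Eh.
 - rewrite (st_S_some l tau Eh). simpl. destruct (hit_some _ _ Eh). lra.
 - rewrite (st_S_none l Eh). lra.
Qed.

Definition Kd (s : R) (l : nat) : Prop :=
  alive l /\ match hit (snd (st l)) with
             | Some tau => fst (st l) <= s <= fst (st l) + tau
             | None => fst (st l) <= s end.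

Definition zd (s : R) (l : nat) : HState := flw (snd (st l)) (s - fst (st l)).

Lemma K_C t l : Kd t l -> InC P (zd t l).
Proof.
 intros [Ha Hm]. destruct (st_inv l Ha) as [HL _]. unfold zd, InC. apply Lambda_mu.
 destruct (hit (snd (st l))) as [tau|] eqn:Eh.
 - destruct (hit_some _ _ Eh) as [H0 [H1 H2]].
   destruct (Req_dec (t - fst (st l)) tau) as [E|E].
   + rewrite E, (hit_zero _ _ HL Eh). lra.
   + left. apply H1. lra.
 - left. apply hit_none; auto. lra.
Qed.

Lemma minimal_ex (Q : nat -> Prop) : (exists n, Q n) -> exists n, Q n /\ forall k, (k < n)%nat -> ~ Q k.
Proof.
 intros [n Hn]. revert Hn. induction n as [n IH] using (well_founded_induction Wf_nat.lt_wf).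
 intros Hn. destruct (classic (exists k, (k < n)%nat /\ Q k)) as [[k [Hk Qk]]|Hno].
 - apply (IH k Hk Qk).
 - exists n. split; auto. intros k Hk Qk. apply Hno. exists k; auto.
Qed.

Lemma HTD : HybridTimeDomain Kd.
Proof.
 exists (fun l => fst (st l)). split; [reflexivity|]. split; [apply tt_mono|].
 destruct (classic (forall l, hit (snd (st l)) <> None)) as [Hall|Hn].
 - left. intros s l. unfold Kd.
   assert (Ha : alive l) by (intros k _; apply Hall).
   specialize (Hall l). destruct (hit (snd (st l))) as [tau|] eqn:Eh; [|contradiction].
   rewrite (st_S_some l tau Eh). simpl. tauto.
 - assert (Hex : exists n, hit (snd (st n)) = None).
   { apply NNPP. intros Hno. apply Hn. intros l E. apply Hno. exists l; auto. }
   destruct (minimal_ex _ Hex) as [J [HJ HJmin]].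
   right. exists J. split; [|split].
   + intros s l Hl. unfold Kd.
     assert (Ha : alive l) by (intros k Hk; apply HJmin; lia).
     assert (Hh : hit (snd (st l)) <> None) by (apply HJmin; auto).
     destruct (hit (snd (st l))) as [tau|] eqn:Eh; [|contradiction].
     rewrite (st_S_some l tau Eh). simpl. tauto.
   + intros s l Hl [Ha _]. apply (Ha J Hl). auto.
   + right; right. intros s. unfold Kd. rewrite HJ.
     assert (Ha : alive J) by (intros k Hk; apply HJmin; auto). tauto.
Qed.

Lemma Kd00 : Kd 0 O.
Proof.
 split. { intros k Hk; lia. }
 simpl. destruct (hit z0) as [tau|] eqn:Eh; [|lra]. destruct (hit_some _ _ Eh). lra.
Qed.

Lemma sol_l l :
  LocAbsContState P (fun t => Kd t l) (fun t => zd t l) /\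
  (forall t, Interior (fun s => Kd s l) t -> InC P (zd t l)) /\
  (exists Nz, NullSet Nz /\
     forall t, Kd t l -> ~ Nz t -> Interior (fun s => Kd s l) t /\ HasFlowDeriv P (fun s => zd s l) t).
Proof.
 set (z := snd (st l)). set (a := fst (st l)).
 split; [|split].
 - unfold zd. fold z a. split; [|split; [|split]].
   + intros i j _. apply Lip_loc. apply (Lip_shift (fun t => eta (flw z t) i j)). apply FPeta.
   + intros j _. apply Lip_loc. apply (Lip_shift (fun t => om (flw z t) j)). apply FPom.
   + intros j k _ _. apply Lip_loc. apply (Lip_shift (fun t => xs (flw z t) j k)). apply FPxs.
   + intros j _. apply Lip_loc. apply (Lip_ext _ (fun _ => IZR (sg z j))); [|apply Lip_const].
     intros t. rewrite FPsg. reflexivity.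
 - intros t [e [He H]]. apply K_C. apply H. unfold Rminus; rewrite Rplus_opp_r, Rabs_R0. auto.
 - exists (fun t => t = a \/ t = fst (st (S l))). split; [apply NullSet_two|].
   intros t Hk Hnz. split.
   + destruct Hk as [Ha Hm]. fold z a in Hm |- *.
     destruct (hit z) as [tau|] eqn:Eh.
     * rewrite (st_S_some l tau Eh) in Hnz. simpl in Hnz. fold a in Hnz.
       assert (a < t < a + tau) by (split; destruct Hm as [H1 H2]; [destruct H1|destruct H2]; auto; exfalso; apply Hnz; auto).
       exists (Rmin (t - a) (a + tau - t)). split; [apply Rmin_pos; lra|].
       intros s Hs. split; auto. unfold z in Eh. rewrite Eh. fold a.
       pose proof (Rmin_l (t - a) (a + tau - t)). pose proof (Rmin_r (t - a) (a + tau - t)).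
       apply Rabs_def2 in Hs. lra.
     * assert (a < t) by (destruct Hm; auto; exfalso; apply Hnz; auto).
       exists (t - a). split; [lra|].
       intros s Hs. split; auto. unfold z in Eh. rewrite Eh. fold a.
       apply Rabs_def2 in Hs. lra.
   + unfold zd. fold z a. apply HFD_shift. apply FPder.
     destruct Hk as [Ha Hm]. fold z a in Hm.
     destruct (hit z); destruct (Req_dec t a); try (exfalso; apply Hnz; auto; fail); lra.
Qed.

Lemma jumps t l : Kd t l -> Kd t (S l) -> InD P (zd t l) /\ zd t (S l) = gmap P (zd t l).
Proof.
 intros [Ha Hm] [Ha' Hm'].
 assert (Hh := Ha' l (Nat.lt_succ_diag_r l)).
 destruct (hit (snd (st l))) as [tau|] eqn:Eh; [|contradiction].
 destruct (st_inv l Ha) as [HL _].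
 rewrite (st_S_some l tau Eh) in Hm'. simpl in Hm'.
 assert (Et : t - fst (st l) = tau).
 { destruct (hit (gmap P (flw (snd (st l)) tau))); lra. }
 unfold zd. rewrite Et. split.
 - apply mu_zero_D. apply (hit_zero _ _ HL Eh).
 - rewrite (st_S_some l tau Eh). simpl. replace (t - (fst (st l) + tau)) with 0 by lra. apply FP0.
Qed.

Lemma complete_K : Complete Kd.
Proof.
 intros Mb.
 destruct (classic (forall l, hit (snd (st l)) <> None)) as [Hall|Hn].
 - destruct (INR_unbounded Mb) as [n Hn].
   assert (Ha : alive n) by (intros k _; apply Hall).
   destruct (st_inv n Ha) as [_ Ht].
   exists (fst (st n)), n. split; [|lra]. split; auto.
   specialize (Hall n). destruct (hit (snd (st n))) as [tau|] eqn:Eh; [|contradiction].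
   destruct (hit_some _ _ Eh). lra.
 - assert (Hex : exists n, hit (snd (st n)) = None).
   { apply NNPP. intros Hno. apply Hn. intros l E. apply Hno. exists l; auto. }
   destruct (minimal_ex _ Hex) as [J [HJ HJmin]].
   exists (Rmax (fst (st J)) Mb), J. split.
   + split. { intros k Hk; apply HJmin; auto. } rewrite HJ. apply Rmax_l.
   + pose proof (Rmax_r (fst (st J)) Mb). pose proof (pos_INR J). lra.
Qed.

Theorem hyb_main : exists (K : R -> nat -> Prop) (z : R -> nat -> HState),
    IsSolution P K z /\ Complete K /\ z 0 O = z0.
Proof.
 exists Kd, zd. split; [|split].
 - split; [apply HTD|]. split; [apply Kd00|]. split.
   + left. unfold zd. simpl. replace (0 - 0) with 0 by ring. rewrite FP0. auto.
   + split; [apply sol_l|apply jumps].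
 - apply complete_K.
 - unfold zd. simpl. replace (0 - 0) with 0 by ring. apply FP0.
Qed.

End Hyb.

Inductive CI := Ceta (i j : nat) | Com (j : nat) | Cxs (j k : nat).

Definition ofVec (v : CI -> R) (s : nat -> Z) : HState :=
  mkHState (fun i j => v (Ceta i j)) (fun j => v (Com j)) (fun j k => v (Cxs j k)) s.

Definition toVec (z : HState) : CI -> R := fun c =>
  match c with Ceta i j => eta z i j | Com j => om z j | Cxs j k => xs z j k end.

Definition Fv (P : Net) (s : nat -> Z) (v : CI -> R) (c : CI) : R :=
  match c with
  | Ceta i j => if andb (i <? nN P)%nat (j <? nN P)%nat then v (Com i) - v (Com j) else 0
  | Com j => if (j <? nN P)%nat then omega_rhs P (ofVec v s) j / Mc P j else 0
  | Cxs j k => if andb (j <? nN P)%nat (k <? ns P j)%nat then fj P j (fun k => v (Cxs j k)) (- v (Com j)) k else 0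
  end.

Definition idxP (P : Net) : list CI :=
  flat_map (fun i => map (fun j => Ceta i j) (seq 0 (nN P))) (seq 0 (nN P)) ++
  map Com (seq 0 (nN P)) ++
  flat_map (fun j => map (Cxs j) (seq 0 (ns P j))) (seq 0 (nN P)).

Lemma in_eta P i j : (i < nN P)%nat -> (j < nN P)%nat -> In (Ceta i j) (idxP P).
Proof. intros. unfold idxP. apply in_or_app. left. apply in_flat_map. exists i. split; [apply in_seq; lia|].
 apply in_map. apply in_seq; lia. Qed.

Lemma in_om P j : (j < nN P)%nat -> In (Com j) (idxP P).
Proof. intros. unfold idxP. apply in_or_app. right. apply in_or_app. left. apply in_map. apply in_seq; lia. Qed.

Lemma in_xs P j k : (j < nN P)%nat -> (k < ns P j)%nat -> In (Cxs j k) (idxP P).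
Proof. intros. unfold idxP. apply in_or_app. right. apply in_or_app. right. apply in_flat_map. exists j.
 split; [apply in_seq; lia|]. apply in_map. apply in_seq; lia. Qed.

Lemma rsum_le_mul m f B : (forall k, (k < m)%nat -> f k <= B) -> rsum m f <= INR m * B.
Proof. induction m; intros H; simpl rsum; [simpl; lra|]. rewrite S_INR.
 assert (rsum m f <= INR m * B) by (apply IHm; intros; apply H; lia). specialize (H m ltac:(lia)). lra. Qed.

Lemma rsum_diff m f g h : (forall k, (k < m)%nat -> Rabs (f k - g k) <= h k) ->
  Rabs (rsum m f - rsum m g) <= rsum m h.
Proof. induction m; intros H; simpl. { unfold Rminus; rewrite Rplus_opp_r, Rabs_R0; lra. }
 replace (rsum m f + f m - (rsum m g + g m)) with ((rsum m f - rsum m g) + (f m - g m)) by ring.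
 eapply Rle_trans; [apply Rabs_triang|]. apply Rplus_le_compat; [apply IHm; intros; apply H; lia|apply H; lia]. Qed.

Lemma rsum_mulr m f c : rsum m (fun k => f k * c) = rsum m f * c.
Proof. induction m; simpl; [ring|]. rewrite IHm; ring. Qed.

Lemma rsum_ge0 m f : (forall k, (k < m)%nat -> 0 <= f k) -> 0 <= rsum m f.
Proof. induction m; intros H; simpl; [lra|]. assert (0 <= rsum m f) by (apply IHm; intros; apply H; lia).
 specialize (H m ltac:(lia)). lra. Qed.

Lemma sin_lip x y : Rabs (sin x - sin y) <= Rabs (x - y).
Proof.
 destruct (MVT_abs sin cos y x) as [c [E _]].
 { intros c _. apply derivable_pt_lim_sin. }
 rewrite E. pose proof (COS_bound c). assert (Rabs (cos c) <= 1) by (apply Rabs_le; lra).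
 pose proof (Rabs_pos (x - y)). nra.
Qed.

Lemma unif_nat (Q : nat -> R -> Prop) (Hm : forall j L L', L <= L' -> Q j L -> Q j L') n :
  (forall j, (j < n)%nat -> exists L, 0 <= L /\ Q j L) -> exists L, 0 <= L /\ forall j, (j < n)%nat -> Q j L.
Proof.
 induction n; intros H.
 - exists 0. split; [lra|]. intros; lia.
 - destruct IHn as [L1 [H1 Q1]]. { intros; apply H; lia. }
   destruct (H n ltac:(lia)) as [L2 [H2 Q2]].
   exists (L1 + L2). split; [lra|]. intros j Hj.
   destruct (Nat.eq_dec j n) as [->|]. { apply (Hm _ L2); auto; lra. }
   apply (Hm _ L1); [lra|]. apply Q1; lia.
Qed.

Lemma abs2 x y : Rabs (x - y) <= Rabs x + Rabs y.
Proof. unfold Rabs; repeat destruct Rcase_abs; lra. Qed.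

Lemma abs3 x y z : Rabs (x - y + z) <= Rabs x + Rabs y + Rabs z.
Proof. unfold Rabs; repeat destruct Rcase_abs; lra. Qed.

Lemma zero_diff_le L N : 0 <= L -> 0 <= N -> Rabs (0 - 0) <= L * N.
Proof. intros. unfold Rminus; rewrite Rplus_opp_r, Rabs_R0. apply Rmult_le_pos; auto. Qed.

Section Lip.
Context (P : Net) (HP : NetAssumptions P).

Definition Nab (a b : CI -> R) := lsum (idxP P) (fun k => a k - b k).

Lemma Nab_ge0 a b : 0 <= Nab a b.
Proof. apply lsum_ge0. Qed.

Lemma coord_le a b c : In c (idxP P) -> Rabs (a c - b c) <= Nab a b.
Proof. intros H. apply (lsum_in (idxP P) (fun k => a k - b k) c H). Qed.

Definition Qn (j : nat) (L : R) : Prop := forall s a b,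
  Rabs (Fv P s a (Com j) - Fv P s b (Com j)) <= L * Nab a b /\
  forall k, Rabs (Fv P s a (Cxs j k) - Fv P s b (Cxs j k)) <= L * Nab a b.

Lemma Qn_mono j L L' : L <= L' -> Qn j L -> Qn j L'.
Proof. intros HL H s a b. destruct (H s a b) as [H1 H2]. pose proof (Nab_ge0 a b). split.
 - eapply Rle_trans; [exact H1|]. apply Rmult_le_compat_r; auto.
 - intros k. eapply Rle_trans; [apply H2|]. apply Rmult_le_compat_r; auto. Qed.

Lemma xs_sum_le a b j : (j < nN P)%nat ->
  rsum (ns P j) (fun i => Rabs (a (Cxs j i) - b (Cxs j i))) <= INR (ns P j) * Nab a b.
Proof. intros Hj. apply rsum_le_mul. intros k Hk. apply coord_le. apply in_xs; auto. Qed.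

Lemma node_lip j : (j < nN P)%nat -> exists L, 0 <= L /\ Qn j L.
Proof.
 intros Hj.
 destruct HP as [HE [_ [_ [HM [HB [_ [_ [Hf Hg]]]]]]]].
 destruct (Hf j Hj) as [Lf HLf]. destruct (Hg j Hj) as [Lg HLg].
 specialize (HM j Hj).
 set (SB1 := rsum (nN P) (fun k => Rabs (Bc P j k))).
 set (SB2 := rsum (nN P) (fun i => Rabs (Bc P i j))).
 assert (HSB1 : 0 <= SB1) by (apply rsum_ge0; intros; apply Rabs_pos).
 assert (HSB2 : 0 <= SB2) by (apply rsum_ge0; intros; apply Rabs_pos).
 set (C := Rabs Lg * (INR (ns P j) + 1) + SB1 + SB2).
 assert (HC : 0 <= C). { unfold C. pose proof (pos_INR (ns P j)). pose proof (Rabs_pos Lg).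
   assert (0 <= Rabs Lg * (INR (ns P j) + 1)) by (apply Rmult_le_pos; lra). lra. }
 exists (C / Mc P j + Rabs Lf * (INR (ns P j) + 1)).
 assert (HD : 0 <= Rabs Lf * (INR (ns P j) + 1)) by (apply Rmult_le_pos; [apply Rabs_pos| pose proof (pos_INR (ns P j)); lra]).
 assert (HCM : 0 <= C / Mc P j) by (apply Rdiv_le_0_compat; lra).
 split; [lra|].
 intros s a b. pose proof (Nab_ge0 a b) as HN.
 assert (Hom : Rabs (- a (Com j) - - b (Com j)) <= Nab a b).
 { replace (- a (Com j) - - b (Com j)) with (- (a (Com j) - b (Com j))) by ring. rewrite Rabs_Ropp.
   apply coord_le. apply in_om; auto. }
 pose proof (xs_sum_le a b j Hj) as Hxs.
 split.
 - simpl Fv. rewrite (proj2 (Nat.ltb_lt _ _) Hj).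
   assert (S1 : Rabs (sflow P (ofVec a s) j - sflow P (ofVec b s) j) <= Rabs Lg * (INR (ns P j) + 1) * Nab a b).
   { unfold sflow; simpl. eapply Rle_trans. apply HLg.
     apply Rle_trans with (Rabs Lg * (rsum (ns P j) (fun i => Rabs (a (Cxs j i) - b (Cxs j i))) + Rabs (- a (Com j) - - b (Com j)))).
     { apply Rmult_le_compat_r; [|apply RRle_abs]. pose proof (Rabs_pos (- a (Com j) - - b (Com j))).
       pose proof (rsum_ge0 (ns P j) (fun i => Rabs (a (Cxs j i) - b (Cxs j i))) (fun k _ => Rabs_pos _)). lra. }
     replace (Rabs Lg * (INR (ns P j) + 1) * Nab a b) with (Rabs Lg * (INR (ns P j) * Nab a b + Nab a b)) by ring.
     apply Rmult_le_compat_l; [apply Rabs_pos|lra]. }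
   assert (S2 : Rabs (rsum (nN P) (fun k => if Enet P j k then pflow P (ofVec a s) j k else 0) -
                      rsum (nN P) (fun k => if Enet P j k then pflow P (ofVec b s) j k else 0)) <= SB1 * Nab a b).
   { unfold SB1. rewrite <- rsum_mulr. apply rsum_diff. intros k Hk.
     destruct (Enet P j k); [|apply zero_diff_le; auto; apply Rabs_pos].
     unfold pflow; simpl. rewrite <- Rmult_minus_distr_l, Rabs_mult.
     apply Rmult_le_compat_l; [apply Rabs_pos|]. eapply Rle_trans; [apply sin_lip|].
     apply coord_le. apply in_eta; auto. }
   assert (S3 : Rabs (rsum (nN P) (fun i => if Enet P i j then pflow P (ofVec a s) i j else 0) -
                      rsum (nN P) (fun i => if Enet P i j then pflow P (ofVec b s) i j else 0)) <= SB2 * Nab a b).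
   { unfold SB2. rewrite <- rsum_mulr. apply rsum_diff. intros i Hi.
     destruct (Enet P i j); [|apply zero_diff_le; auto; apply Rabs_pos].
     unfold pflow; simpl. rewrite <- Rmult_minus_distr_l, Rabs_mult.
     apply Rmult_le_compat_l; [apply Rabs_pos|]. eapply Rle_trans; [apply sin_lip|].
     apply coord_le. apply in_eta; auto. }
   assert (R1 : Rabs (omega_rhs P (ofVec a s) j - omega_rhs P (ofVec b s) j) <= C * Nab a b).
   { unfold omega_rhs. simpl sg.
     match goal with |- Rabs (?A - ?B) <= _ => idtac end.
     replace (- pL P j + sflow P (ofVec a s) j - dbar P j * IZR (s j) -
       rsum (nN P) (fun k => if Enet P j k then pflow P (ofVec a s) j k else 0) +
       rsum (nN P) (fun i => if Enet P i j then pflow P (ofVec a s) i j else 0) -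
      (- pL P j + sflow P (ofVec b s) j - dbar P j * IZR (s j) -
       rsum (nN P) (fun k => if Enet P j k then pflow P (ofVec b s) j k else 0) +
       rsum (nN P) (fun i => if Enet P i j then pflow P (ofVec b s) i j else 0)))
     with ((sflow P (ofVec a s) j - sflow P (ofVec b s) j)
       - (rsum (nN P) (fun k => if Enet P j k then pflow P (ofVec a s) j k else 0) -
          rsum (nN P) (fun k => if Enet P j k then pflow P (ofVec b s) j k else 0))
       + (rsum (nN P) (fun i => if Enet P i j then pflow P (ofVec a s) i j else 0) -
          rsum (nN P) (fun i => if Enet P i j then pflow P (ofVec b s) i j else 0))) by ring.
     eapply Rle_trans; [apply abs3|]. unfold C. lra. }
   unfold Rdiv. rewrite <- Rmult_minus_distr_r, Rabs_mult, (Rabs_pos_eq (/ Mc P j)) by (left; apply Rinv_0_lt_compat; lra).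
   apply Rle_trans with (C * Nab a b * / Mc P j).
   { apply Rmult_le_compat_r; [left; apply Rinv_0_lt_compat; lra|auto]. }
   replace (C * Nab a b * / Mc P j) with (C / Mc P j * Nab a b) by (field; lra).
   apply Rmult_le_compat_r; auto. lra.
 - intros k. simpl Fv. rewrite (proj2 (Nat.ltb_lt _ _) Hj). simpl andb.
   destruct (k <? ns P j)%nat eqn:Ek; [|apply zero_diff_le; lra].
   apply Nat.ltb_lt in Ek. eapply Rle_trans; [apply HLf; auto|].
   apply Rle_trans with (Rabs Lf * (rsum (ns P j) (fun i => Rabs (a (Cxs j i) - b (Cxs j i))) + Rabs (- a (Com j) - - b (Com j)))).
   { apply Rmult_le_compat_r; [|apply RRle_abs]. pose proof (Rabs_pos (- a (Com j) - - b (Com j))).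
     pose proof (rsum_ge0 (ns P j) (fun i => Rabs (a (Cxs j i) - b (Cxs j i))) (fun k _ => Rabs_pos _)). lra. }
   apply Rle_trans with (Rabs Lf * (INR (ns P j) + 1) * Nab a b).
   { replace (Rabs Lf * (INR (ns P j) + 1) * Nab a b) with (Rabs Lf * (INR (ns P j) * Nab a b + Nab a b)) by ring.
     apply Rmult_le_compat_l; [apply Rabs_pos|lra]. }
   apply Rmult_le_compat_r; auto. lra.
Qed.

Lemma Fv_lip : exists L, 0 <= L /\ forall s a b c, Rabs (Fv P s a c - Fv P s b c) <= L * Nab a b.
Proof.
 destruct (unif_nat Qn Qn_mono (nN P) node_lip) as [L [HL HQ]].
 exists (L + 2). split; [lra|]. intros s a b c. pose proof (Nab_ge0 a b) as HN.
 destruct c as [i j|j|j k].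
 - simpl. destruct (i <? nN P)%nat eqn:Ei; destruct (j <? nN P)%nat eqn:Ej; simpl;
     try (apply zero_diff_le; lra).
   apply Nat.ltb_lt in Ei. apply Nat.ltb_lt in Ej.
   replace (a (Com i) - a (Com j) - (b (Com i) - b (Com j))) with ((a (Com i) - b (Com i)) - (a (Com j) - b (Com j))) by ring.
   eapply Rle_trans; [apply abs2|].
   pose proof (coord_le a b (Com i) (in_om P i Ei)). pose proof (coord_le a b (Com j) (in_om P j Ej)).
   assert (0 <= L * Nab a b) by (apply Rmult_le_pos; lra). lra.
 - destruct (j <? nN P)%nat eqn:Ej.
   + apply Nat.ltb_lt in Ej. destruct (HQ j Ej s a b) as [H _]. assert (0 <= 2 * Nab a b) by lra. lra.
   + simpl. rewrite Ej. apply zero_diff_le; lra.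
 - destruct (j <? nN P)%nat eqn:Ej.
   + apply Nat.ltb_lt in Ej. destruct (HQ j Ej s a b) as [_ H]. specialize (H k). assert (0 <= 2 * Nab a b) by lra. lra.
   + simpl. rewrite Ej. simpl. apply zero_diff_le; lra.
Qed.

End Lip.

Theorem lemma4 (P : Net) (HP : NetAssumptions P) (z0 : HState) (Hz0 : InLambda P z0) :
  exists (K : R -> nat -> Prop) (z : R -> nat -> HState),
    IsSolution P K z /\ Complete K /\ z 0 O = z0.
Proof.
 destruct (Fv_lip P HP) as [L [HL0 HL]].
 assert (Hode : forall z : HState, exists x : R -> CI -> R,
    (forall i, x 0 i = toVec z i) /\
    (forall t i, 0 < t -> derivable_pt_lim (fun s => x s i) t (Fv P (sg z) (x t) i)) /\
    (forall T i, exists B, 0 <= B /\ forall s t, s <= T -> t <= T -> Rabs (x t i - x s i) <= B * Rabs (t - s))).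
 { intros z. exact (ode_exists (idxP P) (Fv P (sg z)) L HL0 (HL (sg z)) (toVec z)). }
 pose (xf := fun z => proj1_sig (constructive_indefinite_description _ (Hode z))).
 assert (Hx : forall z, (forall i, xf z 0 i = toVec z i) /\
    (forall t i, 0 < t -> derivable_pt_lim (fun s => xf z s i) t (Fv P (sg z) (xf z t) i)) /\
    (forall T i, exists B, 0 <= B /\ forall s t, s <= T -> t <= T -> Rabs (xf z t i - xf z s i) <= B * Rabs (t - s))).
 { intros z. exact (proj2_sig (constructive_indefinite_description _ (Hode z))). }
 clearbody xf.
 pose proof HP as HP1. destruct HP1 as [HE [_ [_ [HM _]]]].
 apply (hyb_main P HP (fun z t => ofVec (xf z t) (sg z))); auto.
 - intros z. destruct (Hx z) as [H0 _].
   assert (E : xf z 0 = toVec z) by (apply functional_extensionality; auto).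
   rewrite E. destruct z; reflexivity.
 - intros z t Ht. destruct (Hx z) as [_ [Hd _]].
   split; [|split; [|split]].
   + intros i j Eij. simpl. destruct (HE i j Eij) as [Hi Hj].
     pose proof (Hd t (Ceta i j) Ht) as D. simpl in D.
     rewrite (proj2 (Nat.ltb_lt _ _) Hi), (proj2 (Nat.ltb_lt _ _) Hj) in D. exact D.
   + intros j Hj. simpl. exists (Fv P (sg z) (xf z t) (Com j)). split; [apply Hd; auto|].
     simpl. rewrite (proj2 (Nat.ltb_lt _ _) Hj). specialize (HM j Hj). field. lra.
   + intros j k Hj Hk. simpl. pose proof (Hd t (Cxs j k) Ht) as D. simpl in D.
     rewrite (proj2 (Nat.ltb_lt _ _) Hj), (proj2 (Nat.ltb_lt _ _) Hk) in D. exact D.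
   + intros j _. simpl. apply derivable_pt_lim_const.
 - intros z i j. destruct (Hx z) as [_ [_ Hl]]. intros T. apply (Hl T (Ceta i j)).
 - intros z j. destruct (Hx z) as [_ [_ Hl]]. intros T. apply (Hl T (Com j)).
 - intros z j k. destruct (Hx z) as [_ [_ Hl]]. intros T. apply (Hl T (Cxs j k)).
Qed.
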